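(* Define $f:\mathbb N\to\mathbb N$ by $$f(n)=\begin{cases}\lfloor\varphi n\rfloor+1, & n\in R_{0,0},\\ \lfloor(\varphi-1)n\rfloor, & n\in R_{1,0}.\end{cases}$$ Then $f$ is an $R_{i,j}$-permutation of $\mathbb N$ of order $2$ (i.e. $f$ is a bijection of $\mathbb N$, $f\circ f=\mathrm{id}$ and $f\neq\mathrm{id}$). Its first values are $2,1,5,7,3,10,4,13,15,6,\dots$.
   Context: $\mathbb N=\{1,2,\dots\}$, $\varphi=\frac{1+\sqrt5}{2}$. $F$ denotes the Fibonacci numbers ($F(0)=0,F(1)=F(2)=1$). $R_{i,j}$ ($i\in\mathbb Z^{\ge0},j\in\mathbb Z$) is the range of $n\mapsto F(i+1)\lfloor n\varphi\rfloor+F(i)n-j$, $n\in\mathbb N$; thus $R_{0,0}=\{\lfloor n\varphi\rfloor\}$ and $R_{1,0}=\{\lfloor n\varphi^2\rfloor\}$. An $R_{i,j}$-permutation is a permutation $\pi$ of $\mathbb N$ defined piecewise on a finite partition of $\mathbb N$ into sets $R_{i,j}$, with $\pi(n)=\lfloor(a\varphi+b)n+c\rfloor$ for $n$ in a given piece, for integers $a,b,c$ depending on the piece. *)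

(* Defs.v *)
From Stdlib Require Import Reals ZArith List ClassicalEpsilon.
Open Scope R_scope.

Definition phi : R := (1 + sqrt 5) / 2.

(* floor: [up x] is the unique integer with x < up x <= x + 1 *)
Definition Zfloor (x : R) : Z := (up x - 1)%Z.

Fixpoint Fib (n : nat) : Z :=
  match n with
  | O => 0%Z
  | S m => match m with
           | O => 1%Z
           | S k => (Fib m + Fib k)%Z
           end
  end.

(* positive integers = the paper's N = {1,2,...} *)
Definition posZ (n : Z) : Prop := (0 < n)%Z.

Definition Rset (i : nat) (j : Z) (m : Z) : Prop :=
  exists n : Z, (0 < n)%Z /\
    m = (Fib (S i) * Zfloor (IZR n * phi) + Fib i * n - j)%Z.

(* p is a bijection of N = {1,2,...} (values outside N are irrelevant) *)
Definition perm_of_N (p : Z -> Z) : Prop :=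
  (forall n, posZ n -> posZ (p n)) /\
  (forall n m, posZ n -> posZ m -> p n = p m -> n = m) /\
  (forall m, posZ m -> exists n, posZ n /\ p n = m).

(* a piece: (i, j, a, b, c) meaning pi(n) = floor((a phi + b) n + c) on R_{i,j} *)
Definition piece := (nat * Z * Z * Z * Z)%type.

Definition piece_set (q : piece) : Z -> Prop :=
  let '(i, j, _, _, _) := q in Rset i j.

Definition piece_rule (q : piece) (n : Z) : Z :=
  let '(_, _, a, b, c) := q in
  Zfloor ((IZR a * phi + IZR b) * IZR n + IZR c).

Definition default_piece : piece := (O, 0%Z, 0%Z, 0%Z, 0%Z).

Definition is_Rij_permutation (p : Z -> Z) : Prop :=
  perm_of_N p /\
  exists ps : list piece,
    (forall k, (k < length ps)%nat ->
       forall n, piece_set (nth k ps default_piece) n -> posZ n) /\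
    (forall n, posZ n ->
       exists k, (k < length ps)%nat /\ piece_set (nth k ps default_piece) n /\
         forall k', (k' < length ps)%nat ->
           piece_set (nth k' ps default_piece) n -> k' = k) /\
    (forall k, (k < length ps)%nat ->
       forall n, piece_set (nth k ps default_piece) n ->
         p n = piece_rule (nth k ps default_piece) n).

Definition has_order_two (p : Z -> Z) : Prop :=
  (forall n, posZ n -> p (p n) = n) /\ (exists n, posZ n /\ p n <> n).

(* the map f of the theorem; since R_{0,0} and R_{1,0} partition N,
   the second branch is the case n in R_{1,0} *)
Definition f41 (n : Z) : Z :=
  if excluded_middle_informative (Rset 0 0 n)
  then (Zfloor (phi * IZR n) + 1)%Z
  else Zfloor ((phi - 1) * IZR n).

(* Main.v *)
Require Import Defs.
From Stdlib Require Import Reals ZArith List Lra Lia Psatz ClassicalEpsilon.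
Require Import Defs.
Open Scope R_scope.

Lemma Zfloor_spec x : IZR (Zfloor x) <= x < IZR (Zfloor x) + 1.
Proof. unfold Zfloor; rewrite minus_IZR; destruct (archimed x); simpl; lra. Qed.

Lemma Zfloor_eq k x : IZR k <= x < IZR k + 1 -> Zfloor x = k.
Proof.
  unfold Zfloor; intros H.
  assert ((k+1)%Z = up x) by (apply tech_up; rewrite plus_IZR; simpl; lra). lia.
Qed.

Lemma no_sol_aux N : forall n p : Z, (Z.abs_nat n <= N)%nat -> (5*n*n = p*p)%Z -> n = 0%Z.
Proof.
  induction N as [|N IH]; intros n p Hn H.
  - lia.
  - assert (Hm : ((p*p) mod 5 = 0)%Z).
    { rewrite <- H. replace (5*n*n)%Z with ((n*n)*5)%Z by ring. apply Z_mod_mult. }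
    rewrite Z.mul_mod in Hm by lia.
    assert (Hb: (0 <= p mod 5 < 5)%Z) by (apply Z.mod_pos_bound; lia).
    assert (H5 : (p mod 5 = 0)%Z).
    { assert (p mod 5 = 0 \/ p mod 5 = 1 \/ p mod 5 = 2 \/ p mod 5 = 3 \/ p mod 5 = 4)%Z as C by lia.
      destruct C as [C|[C|[C|[C|C]]]]; rewrite C in Hm; simpl in Hm; try discriminate; auto. }
    pose proof (Z.div_mod p 5 ltac:(lia)) as Hd. rewrite H5 in Hd.
    set (q := (p / 5)%Z) in *.
    assert (E : (5*q*q = n*n)%Z) by nia.
    destruct (Z.eq_dec n 0) as [|Hn0]; auto.
    assert (Hq : (Z.abs_nat q <= N)%nat).
    { assert (Z.abs q < Z.abs n)%Z.
      { destruct (Z.abs_spec q) as [[? ->]|[? ->]]; destruct (Z.abs_spec n) as [[? ->]|[? ->]]; nia. }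
      lia. }
    specialize (IH q n Hq E). subst q. nia.
Qed.

Lemma sqrt5_sq : sqrt 5 * sqrt 5 = 5.
Proof. apply sqrt_sqrt; lra. Qed.

Lemma phi_sq : phi * phi = phi + 1.
Proof. unfold phi. pose proof sqrt5_sq. lra. Qed.

Lemma phi_bounds : 1.6 < phi < 1.65.
Proof. unfold phi. pose proof sqrt5_sq. pose proof (sqrt_pos 5). nra. Qed.

Lemma irr n m : n <> 0%Z -> IZR n * phi <> IZR m.
Proof.
  intros Hn H. unfold phi in H. pose proof sqrt5_sq as Hs.
  assert (H1 : IZR n * sqrt 5 = IZR (2*m - n)) by (rewrite minus_IZR, mult_IZR; simpl; lra).
  assert (E: IZR (5*n*n) = IZR ((2*m-n)*(2*m-n))).
  { rewrite !mult_IZR, <- H1. transitivity (IZR n * IZR n * (sqrt 5 * sqrt 5)); [rewrite Hs; ring | ring]. }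
  apply eq_IZR in E. apply Hn. exact (no_sol_aux _ n _ (le_n _) E).
Qed.

Definition wa (n : Z) : Z := Zfloor (IZR n * phi).

Lemma wa_strict n : (0 < n)%Z -> IZR (wa n) < IZR n * phi < IZR (wa n) + 1.
Proof.
  intros Hn. unfold wa. destruct (Zfloor_spec (IZR n * phi)) as [H1 H2]. split; auto.
  destruct H1 as [|H1]; auto. exfalso. apply (irr n (Zfloor (IZR n * phi))); [lia|auto].
Qed.

Lemma wa_pos n : (0 < n)%Z -> (0 < wa n)%Z.
Proof.
  intros Hn. pose proof (wa_strict n Hn). pose proof phi_bounds.
  assert (Hn1 : 1 <= IZR n) by (apply IZR_le; lia).
  assert (0 < IZR (wa n)) by nra. apply lt_IZR in H1. lia.
Qed.

Lemma RsetA m : Defs.Rset 0%nat 0%Z m <-> exists n, (0 < n)%Z /\ m = wa n.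
Proof. unfold Defs.Rset, wa; cbn [Fib]; split; intros [n [H1 H2]]; exists n; split; auto; lia. Qed.

Lemma RsetB m : Defs.Rset 1%nat 0%Z m <-> exists n, (0 < n)%Z /\ m = (wa n + n)%Z.
Proof. unfold Defs.Rset, wa; cbn [Fib]; split; intros [n [H1 H2]]; exists n; split; auto; lia. Qed.

Lemma disjoint n j : (0 < n)%Z -> (0 < j)%Z -> wa n <> (wa j + j)%Z.
Proof.
  intros Hn Hj E.
  pose proof (wa_strict n Hn). pose proof (wa_strict j Hj).
  pose proof phi_sq. pose proof phi_bounds.
  set (k := (n + j - wa n)%Z).
  set (s := IZR n * phi - IZR (wa n)). set (u := IZR j * phi - IZR (wa j)).
  assert (Ek : IZR k * (phi*phi) = s * phi + u).
  { unfold k, s, u. rewrite !minus_IZR, plus_IZR, E, plus_IZR.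
    assert (IZR n * (phi*phi) = IZR n * (phi+1)) by (rewrite H1; ring).
    rewrite H1. lra. }
  destruct (Z_lt_le_dec 0 k) as [Hk|Hk].
  - assert (Hk1 : 1 <= IZR k) by (apply IZR_le; lia).
    assert (IZR k * (phi*phi) >= phi*phi) by nra.
    unfold s, u in *. nra.
  - apply IZR_le in Hk. unfold s, u in *. nra.
Qed.

Lemma cover m : (0 < m)%Z -> (exists n, (0 < n)%Z /\ m = wa n) \/ (exists n, (0 < n)%Z /\ m = (wa n + n)%Z).
Proof.
  intros Hm. pose proof phi_sq. pose proof phi_bounds.
  set (k := Zfloor (IZR (m+1) * (phi - 1))).
  destruct (Zfloor_spec (IZR (m+1) * (phi - 1))) as [K1 K2]. fold k in K1, K2.
  rewrite plus_IZR in K1, K2. simpl in K1, K2.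
  assert (Hmr : 1 <= IZR m) by (apply IZR_le; lia).
  assert (Hk0 : (0 <= k)%Z).
  { assert (-1 < IZR k) by nra. apply lt_IZR in H1. lia. }
  assert (Hk0r : 0 <= IZR k) by (apply IZR_le; lia).
  assert (L1 : IZR k * phi <= IZR m + 1) by nra.
  assert (L2 : IZR m + 1 < (IZR k + 1) * phi) by nra.
  destruct (Z.eq_dec (wa k) m) as [Ew|Ew].
  - left. exists k. split; auto.
    destruct (Z.eq_dec k 0) as [Z0|]; [|lia].
    exfalso. unfold wa in Ew. rewrite Z0 in Ew. rewrite Rmult_0_l in Ew.
    replace 0 with (IZR 0) in Ew by reflexivity.
    rewrite (Zfloor_eq 0 (IZR 0)) in Ew by (simpl; lra). lia.
  - right. exists (m - k)%Z.
    destruct (Zfloor_spec (IZR k * phi)) as [W1 W2]. fold (wa k) in W1, W2.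
    assert (Lt : IZR k * phi < IZR m).
    { destruct (Z.eq_dec k 0) as [Z0|Z0].
      - rewrite Z0. lra.
      - assert (IZR k * phi < IZR m + 1).
        { destruct L1 as [|L1]; auto. exfalso. apply (irr k (m+1)); auto. rewrite plus_IZR; auto. }
        assert (IZR (wa k) < IZR m + 1) by lra.
        rewrite <- plus_IZR in H2. apply lt_IZR in H2.
        assert (wa k + 1 <= m)%Z by lia. apply IZR_le in H3. rewrite plus_IZR in H3. simpl in H3. lra. }
    assert (Hwa : wa (m - k) = k).
    { unfold wa. apply Zfloor_eq. rewrite minus_IZR.
      assert (E : (IZR m - IZR k) * phi - IZR k = phi * (IZR m - IZR k * phi)).
      { assert (IZR k*(phi*phi) = IZR k*(phi+1)) by (rewrite H; ring). lra. }
      split; nra. }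
    split.
    + assert (IZR k < IZR m) by nra. apply lt_IZR in H1. lia.
    + rewrite Hwa. lia.
Qed.

Lemma f41_A m : Rset 0 0 m -> f41 m = (Zfloor (phi * IZR m) + 1)%Z.
Proof. intros H. unfold f41. destruct (excluded_middle_informative _); tauto. Qed.

Lemma f41_nA m : ~ Rset 0 0 m -> f41 m = Zfloor ((phi - 1) * IZR m).
Proof. intros H. unfold f41. destruct (excluded_middle_informative _); tauto. Qed.

Lemma fa n : (0 < n)%Z -> f41 (wa n) = (wa n + n)%Z.
Proof.
  intros Hn. rewrite f41_A by (apply RsetA; eauto).
  pose proof (wa_strict n Hn). pose proof phi_sq. pose proof phi_bounds.
  assert (Zfloor (phi * IZR (wa n)) = (wa n + n - 1)%Z); [|lia].
  apply Zfloor_eq. rewrite minus_IZR, plus_IZR.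
  set (t := IZR n * phi - IZR (wa n)).
  assert (E : phi * IZR (wa n) = IZR (wa n) + IZR n - (phi - 1) * t).
  { unfold t. assert (IZR n*(phi*phi) = IZR n*(phi+1)) by (rewrite H0; ring). lra. }
  rewrite E. assert (0 < t < 1) by (unfold t; lra). simpl. nra.
Qed.

Lemma fb n : (0 < n)%Z -> f41 (wa n + n) = wa n.
Proof.
  intros Hn. rewrite f41_nA.
  2:{ intros HA. apply RsetA in HA. destruct HA as [j [Hj Ej]].
      apply (disjoint j n Hj Hn). lia. }
  pose proof (wa_strict n Hn). pose proof phi_sq. pose proof phi_bounds.
  apply Zfloor_eq. rewrite plus_IZR.
  set (t := IZR n * phi - IZR (wa n)).
  assert (E : (phi - 1) * (IZR (wa n) + IZR n) = IZR (wa n) + (2 - phi) * t).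
  { unfold t. assert (IZR n*(phi*phi) = IZR n*(phi+1)) by (rewrite H0; ring). lra. }
  rewrite E. assert (0 < t < 1) by (unfold t; lra). nra.
Qed.

Lemma f41_invol m : (0 < m)%Z -> (0 < f41 m)%Z /\ f41 (f41 m) = m.
Proof.
  intros Hm. destruct (cover m Hm) as [[n [Hn ->]]|[n [Hn ->]]].
  - rewrite fa by auto. rewrite fb by auto. pose proof (wa_pos n Hn). split; lia.
  - rewrite fb by auto. rewrite fa by auto. pose proof (wa_pos n Hn). split; lia.
Qed.

Lemma wa_val n k : (0 < n)%Z -> IZR k <= IZR n * phi < IZR k + 1 -> wa n = k.
Proof. intros _ H. apply Zfloor_eq; auto. Qed.

Definition ps : list piece := ((0%nat, 0%Z, 1%Z, 0%Z, 1%Z) :: (1%nat, 0%Z, 1%Z, (-1)%Z, 0%Z) :: nil).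

Theorem theorem4p1 :
  is_Rij_permutation f41 /\ has_order_two f41 /\
  List.map f41 (List.map Z.of_nat (List.seq 1 10)) =
    (2 :: 1 :: 5 :: 7 :: 3 :: 10 :: 4 :: 13 :: 15 :: 6 :: nil)%Z.
Proof.
  pose proof phi_bounds as PB.
  assert (A1 : wa 1 = 1%Z) by (apply wa_val; [lia|simpl; lra]).
  assert (A2 : wa 2 = 3%Z) by (apply wa_val; [lia|simpl; lra]).
  assert (A3 : wa 3 = 4%Z) by (apply wa_val; [lia|simpl; lra]).
  assert (A4 : wa 4 = 6%Z) by (apply wa_val; [lia|simpl; lra]).
  assert (A5 : wa 5 = 8%Z) by (apply wa_val; [lia|simpl; lra]).
  assert (A6 : wa 6 = 9%Z) by (apply wa_val; [lia|simpl; lra]).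
  assert (F1 : f41 1 = 2%Z) by (rewrite <- A1; rewrite fa by lia; lia).
  split; [|split].
  - split.
    + split; [|split].
      * intros n Hn. apply (f41_invol n Hn).
      * intros n m Hn Hm E. rewrite <- (proj2 (f41_invol n Hn)), <- (proj2 (f41_invol m Hm)), E. reflexivity.
      * intros m Hm. exists (f41 m). apply (f41_invol m Hm).
    + exists ps. split; [|split].
      * intros k Hk n Hn. unfold posZ.
        destruct k as [|[|k]]; simpl in Hn |- *; [| |simpl in Hk; lia].
        -- apply RsetA in Hn. destruct Hn as [j [Hj ->]]. apply wa_pos; auto.
        -- apply RsetB in Hn. destruct Hn as [j [Hj ->]]. pose proof (wa_pos j Hj). lia.
      * intros n Hn. destruct (cover n Hn) as [HA|HB].
        -- exists 0%nat. split; [simpl; lia|]. split; [simpl; apply RsetA; auto|].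
           intros k' Hk' Hs. destruct k' as [|[|k']]; [auto| |simpl in Hk'; lia].
           simpl in Hs. apply RsetB in Hs. destruct HA as [a [Ha ->]]. destruct Hs as [b [Hb Eb]].
           exfalso. exact (disjoint a b Ha Hb Eb).
        -- exists 1%nat. split; [simpl; lia|]. split; [simpl; apply RsetB; auto|].
           intros k' Hk' Hs. destruct k' as [|[|k']]; [| auto |simpl in Hk'; lia].
           simpl in Hs. apply RsetA in Hs. destruct HB as [a [Ha ->]]. destruct Hs as [b [Hb Eb]].
           exfalso. exact (disjoint b a Hb Ha (eq_sym Eb)).
      * intros k Hk n Hn.
        destruct k as [|[|k]]; simpl in Hn |- *; [| |simpl in Hk; lia].
        -- rewrite f41_A by auto. symmetry. apply Zfloor_eq.
           destruct (Zfloor_spec (phi * IZR n)). rewrite plus_IZR. simpl. lra.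
        -- rewrite f41_nA.
           2:{ intros HA. apply RsetA in HA. apply RsetB in Hn.
               destruct HA as [a [Ha ->]]. destruct Hn as [b [Hb Eb]]. exact (disjoint a b Ha Hb Eb). }
           f_equal. simpl. ring.
  - split.
    + intros n Hn. apply (f41_invol n Hn).
    + exists 1%Z. split; [unfold posZ; lia|]. rewrite F1. lia.
  - cbn [List.seq List.map Z.of_nat Pos.of_succ_nat Pos.succ].
    assert (V2 : f41 2 = 1%Z) by (replace 2%Z with (wa 1 + 1)%Z by lia; rewrite fb; lia).
    assert (V3 : f41 3 = 5%Z) by (replace 3%Z with (wa 2) by lia; rewrite fa; lia).
    assert (V4 : f41 4 = 7%Z) by (replace 4%Z with (wa 3) by lia; rewrite fa; lia).
    assert (V5 : f41 5 = 3%Z) by (replace 5%Z with (wa 2 + 2)%Z by lia; rewrite fb; lia).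
    assert (V6 : f41 6 = 10%Z) by (replace 6%Z with (wa 4) by lia; rewrite fa; lia).
    assert (V7 : f41 7 = 4%Z) by (replace 7%Z with (wa 3 + 3)%Z by lia; rewrite fb; lia).
    assert (V8 : f41 8 = 13%Z) by (replace 8%Z with (wa 5) by lia; rewrite fa; lia).
    assert (V9 : f41 9 = 15%Z) by (replace 9%Z with (wa 6) by lia; rewrite fa; lia).
    assert (V10 : f41 10 = 6%Z) by (replace 10%Z with (wa 4 + 4)%Z by lia; rewrite fb; lia).
    rewrite F1, V2, V3, V4, V5, V6, V7, V8, V9, V10. reflexivity.
Qed.
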